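(* Let $G=(V,E)$ be a unit-weight graph, let $\mathrm{DS}$ be a dominating set of $G$, and let $\mathrm{IS}$ be an arbitrary maximal independent set of the subgraph of $G$ induced by $V\setminus\mathrm{DS}$. Then $\mathrm{Cut}(\mathrm{IS},V\setminus\mathrm{IS})\ge|V|-|\mathrm{DS}|$.
   Context: For a unit-weight graph, $W$ is the symmetric $\{0,1\}$ matrix with $W_{v,v}=1$ and $W_{u,v}=1$ iff $\{u,v\}\in E$. For $S\subseteq V$, $\mathrm{Cut}(S,V\setminus S)=\sum_{u\in S}\sum_{v\in V\setminus S}W_{u,v}$, i.e., the number of edges between $S$ and $V\setminus S$. A dominating set is a set $D$ such that every vertex not in $D$ has a neighbor in $D$. *)

(* Defs.v *)
From mathcomp Require Import all_boot.
Set Implicit Arguments. Unset Strict Implicit. Unset Printing Implicit Defensive.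

Definition simple_graph (T : finType) (e : rel T) : Prop :=
  symmetric e /\ irreflexive e.

Definition W (T : finType) (e : rel T) (u v : T) : nat :=
  ((u == v) || e u v : nat).

Definition cut (T : finType) (e : rel T) (S : {set T}) : nat :=
  \sum_(u in S) \sum_(v in ~: S) W e u v.

Definition dominating (T : finType) (e : rel T) (D : {set T}) : Prop :=
  forall v, v \notin D -> exists2 u, u \in D & e v u.

Definition independent (T : finType) (e : rel T) (S : {set T}) : Prop :=
  forall u v, u \in S -> v \in S -> ~~ e u v.

Definition maximal_independent_in (T : finType) (e : rel T) (U S : {set T}) : Prop :=
  [/\ S \subset U, independent e S &
      forall S' : {set T}, S \proper S' -> S' \subset U -> ~ independent e S'].

(* Main.v *)
Require Import Defs.
From mathcomp Require Import all_boot.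

Theorem lemma5p1 (T : finType) (e : rel T) (DS IS : {set T}) :
  simple_graph e ->
  dominating e DS ->
  maximal_independent_in e (~: DS) IS ->
  #|T| - #|DS| <= cut e IS.
Proof.
move=> [esym eirr] Hdom [subIS indIS maxIS].
have WE u v : e u v -> W e u v = 1 by rewrite /W => ->; rewrite orbT.
rewrite /cut.
under eq_bigr => u _ do rewrite (big_setID DS) /=.
rewrite big_split /=.
have H1 : #|IS| <= \sum_(u in IS) \sum_(v in ~: IS :&: DS) W e u v.
  rewrite -sum1_card; apply: leq_sum => u uIS.
  have uD : u \notin DS by move/subsetP: subIS => /(_ u uIS); rewrite inE.
  have [d dD eud] := Hdom u uD.
  have dIS : d \in ~: IS :&: DS.
    rewrite !inE dD andbT; apply/negP => dI; by move: (indIS u d uIS dI); rewrite eud.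
  by rewrite (bigD1 d) //= WE.
have H2 : #|~: IS :\: DS| <= \sum_(u in IS) \sum_(v in ~: IS :\: DS) W e u v.
  rewrite exchange_big /= -sum1_card; apply: leq_sum => v.
  rewrite !inE => /andP [vD vI].
  case: (boolP [exists u in IS, e u v]) => [/existsP [u /andP [uI euv]]|Hn].
    by rewrite (bigD1 u) //= WE.
  exfalso; apply: (maxIS (v |: IS)).
  - by apply: properUr; rewrite sub1set.
  - apply/subsetP => x; rewrite !inE => /orP [/eqP ->|xI]; first by [].
    by move/subsetP: subIS => /(_ x xI); rewrite inE.
  - move=> a b; rewrite !inE => /orP [/eqP ->|aI] /orP [/eqP ->|bI].
    + by rewrite eirr.
    + apply/negP => evb; move/negP: Hn; apply; apply/existsP; exists b.
      by rewrite bI /= esym.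
    + apply/negP => eav; move/negP: Hn; apply; apply/existsP; exists a.
      by rewrite aI.
    + exact: indIS.
have Hc : #|~: DS| = #|IS| + #|~: IS :\: DS|.
  rewrite -(cardsID IS (~: DS)); congr (_ + _).
    by apply: eq_card => x; rewrite !inE; case: (boolP (x \in IS)) => xI /=;
      [move/subsetP: subIS => /(_ x xI); rewrite inE => -> | rewrite andbF].
  by apply: eq_card => x; rewrite !inE andbC.
have -> : #|T| - #|DS| = #|~: DS| by rewrite -(cardsC DS) addKn.
apply: leq_trans (leq_add H1 H2); rewrite Hc.
by [].
Qed.
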